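(* Let $p$ be an odd prime, $q=p^e$, and let $n,k$ be positive integers. Then: (1) For every $y$ in a field extension of $\mathbb{F}_p$ with $y\neq \tfrac12$, $F_n(1,y(1-y))=\dfrac{y^n-(1-y)^n}{2y-1}$; moreover $F_n(1,\tfrac14)=\dfrac{n}{2^{n-1}}$ in $\mathbb{F}_p$. (2) If $\gcd(n,k)=1$, then $F_{np^k}(1,x)=\bigl(F_n(1,x)\bigr)^{p^k}(1-4x)^{\frac{p^k-1}{2}}$ as polynomials over $\mathbb{F}_p$. (3) If $n_1,n_2$ are positive integers with $n_1\equiv n_2\pmod{q^2-1}$, then $F_{n_1}(1,x_0)=F_{n_2}(1,x_0)$ for every $x_0\in\mathbb{F}_q\setminus\{\tfrac14\}$.
   Context: For an integer $n\ge 1$, the $n$-th reversed Dickson polynomial of the third kind is $F_n(a,x)=\sum_{i=0}^{\lfloor n/2\rfloor}\frac{n-2i}{n-i}\binom{n-i}{i}(-x)^i a^{n-2i}$, where each coefficient $\frac{n-2i}{n-i}\binom{n-i}{i}$ is an integer (read in the field), and $F_0(a,x)=0$. Thus $F_n(1,x)$ is a polynomial with coefficients in $\mathbb{F}_p$. *)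

(* Defs.v *)
From HB Require Import structures.
From mathcomp Require Import all_boot all_order all_algebra all_field.
Set Implicit Arguments. Unset Strict Implicit. Unset Printing Implicit Defensive.
Import Order.TTheory GRing.Theory Num.Theory.
Local Open Scope ring_scope.

(* Coefficient (n-2i)/(n-i) * C(n-i,i) of the reversed Dickson polynomial of
   the third kind; it is an integer, computed here by exact nat division
   (for n = 0 it is 0, consistent with F_0 = 0). *)
Definition rdick3_coef (n i : nat) : nat :=
  (((n - i.*2) * 'C(n - i, i)) %/ (n - i))%N.

Definition rdick3 {R : comNzRingType} (n : nat) (a x : R) : R :=
  if n is 0 then 0 else
  \sum_(i < n./2.+1) (rdick3_coef n i)%:R * (- x) ^+ i * a ^+ (n - i.*2).

(* Main.v *)
Require Import Defs.
From HB Require Import structures.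
From mathcomp Require Import all_boot all_order all_algebra all_field.
From mathcomp Require Import ring zify.
Set Implicit Arguments. Unset Strict Implicit. Unset Printing Implicit Defensive.
Import Order.TTheory GRing.Theory Num.Theory.
Local Open Scope ring_scope.

Section Gen.
Variable R : comNzRingType.

Fixpoint uu (x : R) (n : nat) : R * R :=
  if n is m.+1 then let: (a, b) := uu x m in (b, b - x * a) else (0, 1).
Definition u x n := (uu x n).1.

Lemma u0 x : u x 0 = 0. Proof. by []. Qed.
Lemma u1 x : u x 1 = 1. Proof. by []. Qed.
Lemma uSS x n : u x n.+2 = u x n.+1 - x * u x n.
Proof. rewrite /u /=; by case: (uu x n). Qed.

Definition w (x : R) n := \sum_(i < n) ('C(n.-1 - i, i))%:R * (- x) ^+ i.

Lemma wSS x m : w x m.+2 = w x m.+1 - x * w x m.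
Proof.
rewrite /w big_ord_recl [in X in _ = X - _]big_ord_recl /= !subn0 !bin0 !expr0 !mulr1.
rewrite big_ord_recr /= subnn bin0n mul0r addr0.
have -> : \sum_(i < m) ('C(m.+1 - bump 0 i, bump 0 i))%:R * (- x) ^+ bump 0 i =
   \sum_(i < m) ('C(m - bump 0 i, bump 0 i))%:R * (- x) ^+ bump 0 i
 + \sum_(i < m) ('C(m - i.+1, i))%:R * (- x) ^+ i.+1.
  rewrite -big_split /=; apply: eq_bigr => i _.
  rewrite /bump /= add1n.
  have -> : (m.+1 - i.+1 = (m - i.+1).+1)%N by have := ltn_ord i; lia.
  by rewrite binS natrD mulrDl.
have -> : \sum_(i < m) ('C(m - i.+1, i))%:R * (- x) ^+ i.+1 = - x * \sum_(i < m) ('C(m.-1 - i, i))%:R * (- x) ^+ i.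
  rewrite mulr_sumr; apply: eq_bigr => i _.
  have -> : (m - i.+1 = m.-1 - i)%N by lia.
  by rewrite exprS; ring.
rewrite /bump /=.
under eq_bigr do rewrite add1n.
ring.
Qed.

Lemma uw x n : u x n = w x n.
Proof.
elim/ltn_ind: n => -[|[|n]] IH.
- by rewrite /w big_ord0.
- by rewrite /w big_ord1 /= bin0 mulr1.
- by rewrite uSS wSS !IH.
Qed.

Lemma rdick3_u x n : rdick3 n 1 x = u x n.
Proof.
rewrite uw; case: n => [|n]; first by rewrite /w big_ord0.
rewrite /rdick3 /w /=.
rewrite (big_ord_widen n.+1 (fun i : nat => (rdick3_coef n.+1 i)%:R * (- x) ^+ i * 1 ^+ (n.+1 - i.*2))); last first.
  have H := odd_double_half n; rewrite -mul2n in H; move: H; rewrite ltnS uphalf_half; case: (odd n) => /=; lia.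
rewrite big_mkcond /=; apply: eq_bigr => -[i Hi] _ /=.
rewrite expr1n mulr1.
case: ifP => Hh.
  congr (_%:R * _).
  rewrite /rdick3_coef.
  have -> : (n.+1 - i = (n - i).+1)%N by have H := odd_double_half n; rewrite -mul2n in H; move: H Hh; rewrite uphalf_half; case: (odd n) => /=; lia.
  have -> : (n.+1 - i.*2 = (n - i).+1 - i)%N.
    have H := odd_double_half n; rewrite -mul2n in H; move: H Hh; rewrite uphalf_half -mul2n; case: (odd n) => /=; lia.
  by rewrite -mul_bin_down mulKn.
rewrite bin_small ?mul0r //.
have H := odd_double_half n; rewrite -mul2n in H; move: H Hh; rewrite uphalf_half; case: (odd n) => /=; lia.
Qed.


Section Cong.
Variable x : R.
Definition Q : {poly R} := 'X^2 - 'X + x%:P.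
Definition eqm (A B : {poly R}) := exists S, A = B + S * Q.

Lemma eqm_refl A : eqm A A. Proof. by exists 0; rewrite mul0r addr0. Qed.
Lemma eqm_sym A B : eqm A B -> eqm B A.
Proof. by case=> S ->; exists (- S); ring. Qed.
Lemma eqm_trans A B C : eqm A B -> eqm B C -> eqm A C.
Proof. by case=> S -> [T ->]; exists (T + S); ring. Qed.
Lemma eqmD A B C D : eqm A B -> eqm C D -> eqm (A + C) (B + D).
Proof. by case=> S -> [T ->]; exists (S + T); ring. Qed.
Lemma eqmM A B C D : eqm A B -> eqm C D -> eqm (A * C) (B * D).
Proof. by case=> S -> [T ->]; exists (S * D + B * T + S * T * Q); ring. Qed.
Lemma eqmX A B n : eqm A B -> eqm (A ^+ n) (B ^+ n).
Proof.
move=> H; elim: n => [|n IH]; first by rewrite !expr0; apply: eqm_refl.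
by rewrite !exprS; apply: eqmM.
Qed.
Lemma eqmQ : eqm ('X^2) ('X - x%:P).
Proof. by exists 1; rewrite /Q; ring. Qed.

Lemma sizeQ : size Q = 3%N.
Proof.
rewrite /Q -addrA size_addl ?size_polyXn //.
rewrite (leq_ltn_trans (size_add _ _)) // size_polyC size_opp size_polyX.
by case: (x != 0).
Qed.

Lemma monicQ : Q \is monic.
Proof.
apply/monicP; rewrite /Q -addrA lead_coefDl ?lead_coefXn //.
rewrite size_polyXn (leq_ltn_trans (size_add _ _)) // size_polyC size_opp size_polyX.
by case: (x != 0).
Qed.

Lemma eqm_lin a b c d : eqm (a%:P * 'X + b%:P) (c%:P * 'X + d%:P) -> a = c /\ b = d.
Proof.
case=> S H.
have E : (a - c)%:P * 'X + (b - d)%:P = S * Q.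
  rewrite !polyCB; apply/eqP; rewrite -subr_eq0; apply/eqP.
  transitivity ((a%:P*'X + b%:P) - (c%:P*'X+d%:P + S*Q)); first by ring.
  by rewrite H subrr.
have [S0|Sn0] := eqVneq S 0.
  move: E; rewrite S0 mul0r => /eqP.
  rewrite -size_poly_eq0 size_MXaddC.
  case: ifP => [/andP[]|]; last by [].
  by rewrite polyC_eq0 !subr_eq0 => /eqP -> /eqP ->.
have := congr1 (fun p : {poly R} => size p) E; rewrite /=; rewrite size_Mmonic // ?monicQ // sizeQ size_MXaddC.
rewrite addn3 /=; case: ifP => // _; rewrite size_polyC.
have : (0 < size S)%N by rewrite size_poly_gt0.
move=> H0 H1; exfalso; move: H0 H1; case: (a - c != 0) => /=; lia.
Qed.

Lemma Xpow n : eqm ('X^(n.+1)) ((u x n.+1)%:P * 'X + (- (x * u x n))%:P).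
Proof.
elim: n => [|n IH].
  by rewrite u1 u0 mulr0 oppr0 addr0 mul1r expr1; apply: eqm_refl.
rewrite exprS.
apply: eqm_trans (eqmM (eqm_refl 'X) IH) _.
have E : 'X * ((u x n.+1)%:P * 'X + (- (x * u x n))%:P) =
   (u x n.+1)%:P * 'X^2 + (- (x * u x n))%:P * 'X by ring.
rewrite E.
apply: eqm_trans (eqmD (eqmM (eqm_refl (u x n.+1)%:P) eqmQ) (eqm_refl _)) _.
rewrite uSS; apply: eqm_sym; exists 0; rewrite mul0r addr0 !polyCN !polyCB !polyCM; ring.
Qed.
End Cong.
End Gen.

Lemma eqm_eq (R : comNzRingType) (x : R) A B : A = B -> eqm x A B.
Proof. by move=> ->; apply: eqm_refl. Qed.

Lemma frob (S : comNzRingType) p k (a b : S) : p \in [pchar S] ->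
  (a + b) ^+ (p ^ k) = a ^+ (p ^ k) + b ^+ (p ^ k).
Proof.
move=> H; apply: exprDn_pchar.
rewrite (eq_pnat _ (pcharf_eq H)) pnatX pnat_id ?orTb //.
exact: (pcharf_prime H).
Qed.

Section Part2.
Variable R : idomainType.
Variables (p k : nat) (x : R).
Hypothesis pchar : p \in [pchar R].
Hypothesis oddp : odd p.
Let q := (p ^ k)%N.

Lemma pcharP : p \in [pchar {poly R}].
Proof. by rewrite pchar_poly. Qed.

Lemma q_gt0 : (0 < q)%N.
Proof. by rewrite /q expn_gt0 prime_gt0 // (pcharf_prime pchar). Qed.

Lemma oddq : odd q.
Proof. by rewrite /q oddX oddp orbT. Qed.

Lemma XpowS m : (0 < m)%N -> eqm x ('X^m) ((u x m)%:P * 'X + (- (x * u x m.-1))%:P).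
Proof. by case: m => // m _; apply: Xpow. Qed.

Lemma stepA n : (0 < n)%N -> u x (n * q) = u x n ^+ q * u x q.
Proof.
move=> n0.
have nq0 : (0 < n * q)%N by rewrite muln_gt0 n0 q_gt0.
have h1 := XpowS nq0.
have h2 : eqm x ('X^(n * q)) (((u x n) ^+ q)%:P * 'X^q + ((- (x * u x n.-1)) ^+ q)%:P).
  rewrite exprM; apply: eqm_trans (eqmX q (XpowS n0)) _; apply: eqm_eq.
  by rewrite /q frob ?pcharP // exprMn !polyC_exp.
have h3 := eqm_trans (eqm_sym h1) (eqm_trans h2
   (eqmD (eqmM (eqm_refl x ((u x n ^+ q)%:P)) (XpowS q_gt0)) (eqm_refl x _))).
have h4 : eqm x ((u x n ^+ q)%:P * ((u x q)%:P * 'X + (- (x * u x q.-1))%:P) + ((- (x * u x n.-1)) ^+ q)%:P)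
   ((u x n ^+ q * u x q)%:P * 'X + (u x n ^+ q * (- (x * u x q.-1)) + (- (x * u x n.-1)) ^+ q)%:P).
  by apply: eqm_eq; rewrite !polyCD !polyCM; ring.
by case: (eqm_lin (eqm_trans h3 h4)).
Qed.

Lemma two_neq0 : (2%:R : R) != 0.
Proof.
rewrite -(dvdn_pcharf pchar); apply/negP => /(dvdn_leq (isT : (0 < 2)%N)).
have := pcharf_prime pchar; move: oddp.
by case: p => [|[|[|]]].
Qed.

Lemma sq_cong : eqm x ((2%:R * 'X - 1) ^+ q)
  ((2%:R * (1 - 4%:R * x) ^+ (q.-1)./2)%:P * 'X + (- (1 - 4%:R * x) ^+ (q.-1)./2)%:P).
Proof.
set m := (q.-1)./2.
have qm : q = m.*2.+1.
  rewrite /m; have := oddq; have := q_gt0; case: q => // q' _ /= oq.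
  by rewrite -{1}(odd_double_half q') (negbTE oq) add0n.
pose s : {poly R} := 2%:R * 'X - 1.
have hs2 : eqm x (s ^+ 2) ((1 - 4%:R * x) %:P).
  by exists 4%:R; rewrite /s /Q polyCB polyCM ?polyC1 -polyC_natr; ring.
rewrite -/s qm exprS -mul2n exprM.
apply: eqm_trans (eqmM (eqm_refl x s) (eqmX m hs2)) _.
by apply: eqm_eq; rewrite /s -polyC_exp polyCN polyCM -polyC_natr; ring.
Qed.

Lemma sq_frob : (2%:R * 'X - 1 : {poly R}) ^+ q = 2%:R * 'X^q - 1.
Proof.
  rewrite -[_ - 1]/(_ + (-1)) frob ?pcharP // -signr_odd oddq expr1.
  rewrite exprMn; congr (_ * _ - _).
  have := frob k (1 : {poly R}) 1 pcharP; rewrite -/q => H.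
  by rewrite -[2%:R]/(1 + 1 : {poly R}) H expr1n.
Qed.

Lemma stepB : u x q = (1 - 4%:R * x) ^+ (q.-1)./2.
Proof.
set m := (q.-1)./2.
have e3 : eqm x ((2%:R * 'X - 1) ^+ q) ((2%:R * u x q)%:P * 'X + (- 1 - 2%:R * (x * u x q.-1))%:P).
  rewrite sq_frob; apply: eqm_trans (eqmD (eqmM (eqm_refl x 2%:R) (XpowS q_gt0)) (eqm_refl x _)) _.
  by apply: eqm_eq; rewrite polyCB polyCM polyCN polyCM -polyC_natr ?polyC1; ring.
have [h _] := eqm_lin (eqm_trans (eqm_sym e3) sq_cong).
by apply: (mulfI two_neq0).
Qed.

Lemma part2 n : (0 < n)%N -> u x (n * q) = u x n ^+ q * (1 - 4%:R * x) ^+ (q.-1)./2.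
Proof. by move=> n0; rewrite stepA // stepB. Qed.
End Part2.

Lemma part1a (K : comNzRingType) (y : K) n :
  (2%:R * y - 1) * u (y * (1 - y)) n = y ^+ n - (1 - y) ^+ n.
Proof.
elim/ltn_ind: n => -[|[|n]] IH.
- by rewrite u0 mulr0 !expr0 subrr.
- by rewrite u1 mulr1 !expr1; ring.
- rewrite uSS mulrBr mulrCA IH // IH // !exprS; ring.
Qed.

Lemma part1b (F : fieldType) n : (2%:R : F) != 0 ->
  u (4%:R^-1 : F) n * 2%:R ^+ n = 2%:R * n%:R.
Proof.
move=> h2.
have h4 : (4%:R : F) = 2%:R * 2%:R by rewrite -natrM.
elim/ltn_ind: n => -[|[|n]] IH.
- by rewrite u0 mul0r mulr0.
- by rewrite u1 expr1 mul1r mulr1.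
- rewrite uSS mulrBl -mulrA !exprS.
  have := IH n.+1 (ltnSn _); have := IH n (ltnW (ltnSn _)).
  rewrite !exprS => A B.
  have -> : (4%:R^-1 : F) * (u 4%:R^-1 n * (2%:R * (2%:R * 2%:R ^+ n))) = u 4%:R^-1 n * 2%:R ^+ n.
    by field; rewrite h4 mulf_neq0.
  rewrite A.
  have -> : u 4%:R^-1 n.+1 * (2%:R * (2%:R * 2%:R ^+ n)) = 2%:R * (u 4%:R^-1 n.+1 * (2%:R * 2%:R ^+ n)) :> F by ring.
  by rewrite B -addn2 -(addn1 n) !natrD; ring.
Qed.

Lemma q_half (q : nat) : odd q -> q = ((q.-1)./2).*2.+1.
Proof.
case: q => // q' /= oq.
by rewrite -{1}(odd_double_half q') (negbTE oq) add0n.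
Qed.


Section Part3.
Variable K : finFieldType.
Variables (p e : nat) (x0 : K).
Hypothesis pcharK : p \in [pchar K].
Hypothesis oddp : odd p.
Hypothesis cardK : #|K| = (p ^ e)%N.
Hypothesis hx : x0 != 4%:R^-1.
Let q := (p ^ e)%N.
Let m := (q.-1)./2.
Let D := 1 - 4%:R * x0.
Let eps := D ^+ m.
Let c := (1 - eps) / 2%:R.

Lemma h2K : (2%:R : K) != 0. Proof. exact: two_neq0 pcharK oddp. Qed.

Lemma Dn0 : D != 0.
Proof.
apply: contra hx; rewrite /D subr_eq0 => /eqP h.
have h4 : (4%:R : K) != 0.
  have -> : (4%:R : K) = 2%:R * 2%:R by rewrite -natrM.
  by rewrite mulf_neq0 // h2K.

by rewrite -[x0](mulKf h4) -h mulr1.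
Qed.

Lemma eps2 : eps * eps = 1.
Proof.
have hq : (D ^+ q = D) by rewrite /q -cardK expf_card.
have qm : q = m.*2.+1 by apply: q_half; rewrite /q oddX oddp orbT.
rewrite /eps -exprD addnn.
apply: (mulIf Dn0); rewrite mul1r -exprSr -qm; exact: hq.
Qed.

Lemma pcharPK : p \in [pchar {poly K}].
Proof. by rewrite pchar_poly. Qed.

Lemma Xq : eqm x0 ('X^q) (eps%:P * 'X + c%:P).
Proof.
have h := sq_cong e x0 pcharK oddp; rewrite (sq_frob e pcharK oddp) in h.
have h' := eqmD (eqmM (eqm_refl x0 (2%:R^-1)%:P) h) (eqm_refl x0 (2%:R^-1)%:P).
have hh : (2%:R^-1)%:P * 2%:R = 1 :> {poly K} by rewrite -polyC_natr -polyCM mulVf // h2K.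
apply: eqm_trans (eqm_trans _ h') _; apply: eqm_eq.
  transitivity (((2%:R^-1)%:P * 2%:R) * 'X^q : {poly K}); first by rewrite hh mul1r.
  rewrite mulrBr mulr1 mulrA; ring.
have e1 : (2%:R^-1 * (2%:R * eps) = eps :> K) by rewrite mulrA mulVf ?mul1r // h2K.
have e2 : (c = 2%:R^-1 * - eps + 2%:R^-1 :> K) by rewrite /c; ring.
rewrite -/m -/D -/eps mulrDr mulrA -!polyCM e1 e2 polyCD; ring.
Qed.

Lemma Xqq : eqm x0 ('X^(q * q)) 'X.
Proof.
rewrite exprM; apply: eqm_trans (eqmX q Xq) _.
have he : forall z : K, z ^+ (p ^ e) = z by move=> z; rewrite -cardK expf_card.
rewrite (frob e _ _ pcharPK) exprMn -!polyC_exp !he -/q.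
apply: eqm_trans (eqmD (eqmM (eqm_refl x0 eps%:P) Xq) (eqm_refl x0 c%:P)) _.
apply: eqm_eq.
have h1 : eps%:P * eps%:P = 1 :> {poly K} by rewrite -polyCM eps2.
have h2 : (eps * c + c = 0 :> K).
  rewrite /c mulrA -mulrDl; apply/eqP; rewrite mulf_eq0; apply/orP; left.
  have -> : eps * (1 - eps) + (1 - eps) = 1 - eps * eps by ring.
  by rewrite eps2 subrr.
transitivity ((eps%:P * eps%:P) * 'X + (eps * c + c)%:P : {poly K}); first by rewrite polyCD (polyCM eps); ring.
by rewrite h1 h2 mul1r addr0.
Qed.

Lemma period1 a : (0 < a)%N -> eqm x0 ('X^(a + (q * q).-1)) ('X^a).
Proof.
case: a => // a _.
have qq : (0 < q * q)%N by rewrite muln_gt0 andbb /q expn_gt0 prime_gt0 // (pcharf_prime pcharK).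
have -> : (a.+1 + (q * q).-1 = a + q * q)%N by lia.
rewrite exprD exprSr; apply: eqmM (eqm_refl _ _) Xqq.
Qed.

Lemma periodj a j : (0 < a)%N -> eqm x0 ('X^(a + j * (q * q).-1)) ('X^a).
Proof.
move=> a0; elim: j => [|j IH]; first by rewrite mul0n addn0; apply: eqm_refl.
rewrite mulSn (addnC (q * q).-1) addnA.
apply: eqm_trans (period1 _) IH.
by rewrite addn_gt0 a0.
Qed.

Lemma part3 n1 n2 : (0 < n1)%N -> (0 < n2)%N -> n1 = n2 %[mod (p ^ e) ^ 2 - 1] ->
  u x0 n1 = u x0 n2.
Proof.
wlog le12 : n1 n2 / (n1 <= n2)%N.
  move=> H h1 h2 hm; case: (leqP n1 n2) => l; first exact: H.
  have l' : (n2 <= n1)%N by apply: ltnW.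
  by symmetry; apply: (H n2 n1 l' h2 h1); rewrite hm.
move=> h1 h2 /eqP; rewrite eq_sym eqn_mod_dvd // => /dvdnP [j hj].
have hn2 : n2 = (n1 + j * (q * q).-1)%N.
  move: hj; rewrite mulnn -subn1 -/q; lia.
have E1 := XpowS x0 h1; have E2 := XpowS x0 h2.
have P := periodj j h1; rewrite -hn2 in P.
by case: (eqm_lin (eqm_trans (eqm_sym E1) (eqm_trans (eqm_sym P) E2))).
Qed.
End Part3.

Theorem theorem2p3 (p e n k : nat) :
  prime p -> odd p -> (0 < e)%N -> (0 < n)%N -> (0 < k)%N ->
  (* (1) *)
  ((forall (K : fieldType), p \in [pchar K] ->
     forall y : K, y != 2^-1 ->
       rdick3 n 1 (y * (1 - y)) = (y ^+ n - (1 - y) ^+ n) / (2 * y - 1))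
   /\ rdick3 n (1 : 'F_p) (4^-1) = n%:R / 2 ^+ (n - 1))
  (* (2) *)
  /\ (coprime n k ->
      rdick3 (n * p ^ k) (1 : {poly 'F_p}) 'X
        = (rdick3 n (1 : {poly 'F_p}) 'X) ^+ (p ^ k)
          * (1 - 4%:R *: 'X) ^+ ((p ^ k - 1)./2))
  (* (3) *)
  /\ (forall n1 n2 : nat, (0 < n1)%N -> (0 < n2)%N ->
      n1 = n2 %[mod (p ^ e) ^ 2 - 1] ->
      forall (K : finFieldType), #|K| = (p ^ e)%N ->
      forall x0 : K, x0 != 4^-1 -> rdick3 n1 1 x0 = rdick3 n2 1 x0).
Proof.
move=> pp op e0 n0 k0.
split; [split | split].
- move=> K pK y hy; rewrite rdick3_u.
  have h2 := two_neq0 pK op.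
  have hd : 2%:R * y - 1 != 0.
    apply: contra hy; rewrite subr_eq0 => /eqP h.
    by rewrite -[y](mulKf h2) h mulr1.
  by rewrite -part1a [_ * u _ _]mulrC mulfK.
- rewrite rdick3_u.
  have h2 := two_neq0 (pchar_Fp pp) op.
  have H := part1b n h2.
  case: n n0 H => // m _ H; rewrite subn1 /=.
  apply: (mulIf (expf_neq0 m.+1 h2)); rewrite H exprS.
  by field; rewrite expf_neq0.
- move=> _; rewrite !rdick3_u -mul_polyC polyC_natr subn1.
  have pc : p \in [pchar {poly 'F_p}] by rewrite pchar_poly pchar_Fp.
  exact: part2.
- move=> n1 n2 h1 h2 hm K cK x0 hx; rewrite !rdick3_u.
  have pK : p \in [pchar K] by apply: card_finPcharP cK pp.
  exact: part3 pK op cK hx n1 n2 h1 h2 hm.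
Qed.
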